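(* Let $L$ be a finite simplicial complex, $M\in Z_k(L;\mathbb{Z}/2)$ a $k$-cycle (identified with its support) and $\Delta$ a $k$-simplex of $M$, and suppose $(M,\Delta)$ satisfies the $*$-condition: for all $k$-simplices $\sigma,\tau$ of $M$ such that every vertex of $\Delta$ lies in $\sigma\cup\tau$, one has $\sigma\cap\tau\subset\Delta$. Then the chain $\Omega\in C_{2k}(\mathcal C(D);\mathbb{Z}/2)$ defined below is a cycle.
   Context: For $L$ with vertex set $V$, $OL$ is the simplicial complex with vertex set $V\times\{\pm1\}$ (write $v^\pm=(v,\pm1)$) in which $\{(v_0,\varepsilon_0),\dots,(v_j,\varepsilon_j)\}$ spans a simplex iff the $v_i$ are distinct and $\{v_0,\dots,v_j\}$ is a simplex of $L$; $p:OL\to L$, $v^\pm\mapsto v$. For a simplicial complex $K$, $\mathcal C(K)$ is the quotient of the simplicial deleted product $\bigcup\{\sigma\times\tau:\sigma\cap\tau=\emptyset\}\subset K\times K$ by the factor-switching involution (a cell complex whose cells are unordered pairs $\{\sigma,\tau\}$ of disjoint simplices). Let $D$ be the full subcomplex of $OL$ spanned by the vertices $u^-$ for $u$ a vertex of $M$ and $u^+$ for $u$ a vertex of $\Delta$. $\Omega$ is the mod 2 chain which is the sum of all $2k$-cells $\{\sigma,\tau\}$ of $\mathcal C(D)$ ($\sigma,\tau$ $k$-simplices of $D$) such that $\sigma\cap\tau=\emptyset$ and every vertex of $\Delta$ lies in $p(\sigma)\cup p(\tau)$. *)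

(* Defs.v *)
From mathcomp Require Import all_boot.
Set Implicit Arguments. Unset Strict Implicit. Unset Printing Implicit Defensive.

Section Defs.
Variable V : finType.

Definition is_simplicial_complex (L : {set {set V}}) : Prop :=
  set0 \notin L /\
  forall s t : {set V}, s \in L -> t \subset s -> t != set0 -> t \in L.

(* M (identified with the support of a mod 2 chain) is a k-cycle of L:
   a set of k-simplices of L such that every (k-1)-face (nonempty, i.e.
   non-reduced homology) lies in an even number of them. *)
Definition is_kcycle (L : {set {set V}}) (k : nat) (M : {set {set V}}) : Prop :=
  M \subset L /\
  (forall s, s \in M -> #|s| = k.+1) /\
  (forall rho : {set V}, rho != set0 -> #|rho| = k ->
     ~~ odd #|[set s in M | rho \subset s]|).

Definition star_condition (M : {set {set V}}) (Delta : {set V}) : Prop :=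
  forall sigma tau : {set V}, sigma \in M -> tau \in M ->
    Delta \subset sigma :|: tau -> sigma :&: tau \subset Delta.

(* signed vertices v^+ = (v,true), v^- = (v,false) ; p = first projection *)
Definition proj (S : {set V * bool}) : {set V} := [set x.1 | x in S].

Definition vertM (M : {set {set V}}) : {set V} := \bigcup_(s in M) s.

(* Simplices of D: the full subcomplex of O(M) (M identified with its
   support, i.e. the subcomplex generated by its k-simplices) spanned by
   u^- (u a vertex of M) and u^+ (u a vertex of Delta). *)
Definition in_D (M : {set {set V}}) (Delta : {set V}) (S : {set V * bool}) : bool :=
  [&& S != set0,
      #|proj S| == #|S|,                       (* underlying vertices distinct *)
      [exists s in M, proj S \subset s]
    & [forall x in S, if x.2 then x.1 \in Delta else x.1 \in vertM M]].

(* Cells of C(D) are unordered pairs {sigma, tau}, represented as 2-element sets. *)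
Definition cell := {set {set V * bool}}.

Definition Omega (M : {set {set V}}) (Delta : {set V}) (k : nat) : {set cell} :=
  [set c : cell | [exists sigma : {set V * bool}, exists tau : {set V * bool},
     [&& c == [set sigma; tau], in_D M Delta sigma, in_D M Delta tau,
         #|sigma| == k.+1, #|tau| == k.+1, [disjoint sigma & tau]
       & Delta \subset proj sigma :|: proj tau]]].

Definition is_bface (c' c : cell) : bool :=
  [exists sigma in c, exists tau in c, exists x in sigma,
     [&& sigma != tau, sigma :\ x != set0 & c' == [set sigma :\ x; tau]]].

(* A mod 2 cellular chain (a set of cells) is a cycle: its boundary vanishes,
   i.e. every cell occurs as a face of an even number of its cells. *)
Definition is_cycle2 (Om : {set cell}) : Prop :=
  forall c' : cell, ~~ odd #|[set c in Om | is_bface c' c]|.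

End Defs.

(* Main.v *)
Require Import Defs.
From mathcomp Require Import all_boot.
Set Implicit Arguments. Unset Strict Implicit. Unset Printing Implicit Defensive.

Section Proof.
Variable V : finType.
Variables (k : nat) (M : {set {set V}}) (Delta : {set V}).
Hypothesis Msize : forall s, s \in M -> #|s| = k.+1.
Hypothesis Mcyc : forall rho : {set V}, rho != set0 -> #|rho| = k ->
     ~~ odd #|[set s in M | rho \subset s]|.
Hypothesis DeltaM : Delta \in M.
Hypothesis star : star_condition M Delta.

Definition good (s t : {set V * bool}) := [&& in_D M Delta s, in_D M Delta t,
   #|s| == k.+1, #|t| == k.+1, [disjoint s & t] & Delta \subset proj s :|: proj t].

Lemma good_sym s t : good s t = good t s.
Proof.
rewrite /good disjoint_sym setUC.
by case: (in_D M Delta s); case: (in_D M Delta t); case: (#|s| == _);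
  case: (#|t| == _).
Qed.

Lemma proj_setU1 (x : V * bool) (S : {set V * bool}) : proj (x |: S) = x.1 |: proj S.
Proof. by rewrite /proj imsetU1. Qed.

Lemma proj_mem v (S : {set V * bool}) : v \in proj S -> exists b, (v, b) \in S.
Proof. case/imsetP => [[u b] h ->]; by exists b. Qed.

Lemma ex_M (S : {set V}) : #|S| = k.+1 -> [exists s in M, S \subset s] = (S \in M).
Proof.
move=> hS; apply/existsP/idP => [[s /andP [sM Ss]] | SM].
  have E : S == s by rewrite eqEcard Ss (Msize sM) hS leqnn.
  by rewrite (eqP E).
by exists S; rewrite SM subxx.
Qed.

Lemma forall_U1 (T : finType) (P : pred T) x (A : {set T}) :
  [forall y in x |: A, P y] = P x && [forall y in A, P y].
Proof.
apply/forall_inP/andP => [H | [Px /forall_inP H] y].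
  split; first by apply: H; rewrite setU11.
  by apply/forall_inP => y yA; apply: H; rewrite setU1r.
by rewrite in_setU1 => /predU1P [-> | /H].
Qed.

Lemma disjU1 (T : finType) x (A B : {set T}) :
  [disjoint x |: A & B] = (x \notin B) && [disjoint A & B].
Proof.
rewrite -!setI_eq0 setIUl. apply/idP/andP.
  move/eqP/setP => E; split.
    apply/negP => xB; move: (E x); rewrite !inE eqxx xB /=; by [].
  apply/eqP/setP => y; move: (E y); rewrite !inE; case: (y \in A); rewrite ?orbT ?andbT //=.
  by case: (y \in B); rewrite ?orbF ?andbF //= orbT.
case=> xB /eqP AB; rewrite AB setU0; apply/eqP/setP => y; rewrite !inE.
by apply/andP => [[/eqP -> ]]; apply/negP.
Qed.


Section Rho.
Variables (rho tau : {set V * bool}).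
Hypothesis hrne : rho != set0.
Hypothesis hrk : #|rho| = k.
Hypothesis hrinj : #|proj rho| = #|rho|.
Hypothesis hrsgn : [forall y in rho, if y.2 then y.1 \in Delta else y.1 \in vertM M].
Hypothesis htau : in_D M Delta tau.
Hypothesis htk : #|tau| = k.+1.
Hypothesis hdisj : [disjoint rho & tau].

Lemma goodX x : x \notin rho -> good (x |: rho) tau =
  [&& x.1 \notin proj rho, x.1 |: proj rho \in M, (if x.2 then x.1 \in Delta else true),
      x \notin tau & Delta \subset x.1 |: (proj rho :|: proj tau)].
Proof.
move=> xr.
rewrite /good htau htk eqxx cardsU1 xr hrk add1n eqxx disjU1 hdisj proj_setU1 setUA andbT /=.
rewrite /in_D proj_setU1 !cardsU1 xr -hrinj.
case: (boolP (x.1 \in proj rho)) => h /=.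
  by rewrite eqn_add2r /= andbF.
rewrite eqxx ex_M; last by rewrite cardsU1 h hrinj hrk.
rewrite forall_U1 hrsgn andbT.
case hM: (x.1 |: proj rho \in M); rewrite /= ?andbF //.
have -> : x.1 \in vertM M by apply/bigcupP; exists (x.1 |: proj rho) => //; rewrite setU11.
have -> : x |: rho != set0 by apply/set0Pn; exists x; rewrite setU11.
by case: x.2; rewrite /= ?andbF.
Qed.


Definition X := [set x | (x \notin rho) && good (x |: rho) tau].

Lemma tau_inj : {in tau &, injective fst}.
Proof. by apply/imset_injP; case/and4P: htau. Qed.

Lemma ptauM : proj tau \in M.
Proof.
case/and4P: htau => _ /eqP hc hex _.
by rewrite -ex_M // hc htk.
Qed.

Lemma notin_rho x : x.1 \notin proj rho -> x \notin rho.
Proof. by apply: contra => xr; apply: imset_f. Qed.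

Lemma count_X : ~~ odd #|X|.
Proof.
case: (boolP (Delta \subset proj rho :|: proj tau)) => hD; last first.
  case/subsetPn: hD => w wD; rewrite in_setU negb_or => /andP [wr wt].
  have memW b : ((w, b) \in X) = (w |: proj rho \in M) && (Delta \subset w |: (proj rho :|: proj tau)).
    rewrite inE notin_rho //= goodX ?notin_rho //= wr /=.
    have -> : (w, b) \notin tau by apply: contra wt => h; apply: (imset_f fst h).
    by case: b; rewrite /= ?wD.
  have fstX x : x \in X -> x.1 = w.
    rewrite inE => /andP [xr]; rewrite goodX // => /and5P [_ _ _ _ /subsetP /(_ w wD)].
    by rewrite in_setU1 in_setU (negbTE wr) (negbTE wt) /= orbF => /eqP ->.
  case hf: ((w, false) \in X).
    have -> : X = [set (w, true); (w, false)].
      apply/setP => x; rewrite in_set2; apply/idP/idP.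
        move=> xX; case: x xX (fstX _ xX) => v b xX /= E; rewrite E; clear xX; by case: b; rewrite eqxx ?orbT.
      case/orP => /eqP ->; last by [].
      by rewrite memW -(memW false).
    rewrite cards2; have -> : (w, true) != (w, false) by apply/eqP; case.
    by [].
  have -> : X = set0.
    apply/setP => x; rewrite in_set0; apply/negP => xX.
    case: x xX (fstX _ xX) => v b xX /= E; move: xX; rewrite E memW -(memW false) hf.
    by [].
  by rewrite cards0.
pose N := [set v | (v \notin proj rho) && (v |: proj rho \in M)].
have XE x : (x \in X) = [&& x.1 \notin proj rho, x.1 |: proj rho \in M,
      (if x.2 then x.1 \in Delta else true) & x \notin tau].
  rewrite inE; case: (boolP (x.1 \in proj rho)) => h.
    have [xr|xr] := boolP (x \in rho); first by [].
    by rewrite /= goodX // h.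
  rewrite notin_rho //= goodX ?notin_rho //=.
  have -> : Delta \subset x.1 |: (proj rho :|: proj tau) by apply: (subset_trans hD); apply: subsetUr.
  by rewrite h andbT.
have injX : {in X &, injective fst}.
  move=> [v b] [u c]; rewrite !XE /= => /and4P [vr vM vD vt] /and4P [ur uM uD ut] E.
  subst u; case: b c vD uD vt ut => [] [] //= vD uD vt ut.
    have : v \in proj tau.
      by move/subsetP: hD => /(_ v vD); rewrite in_setU (negbTE vr).
    by case/proj_mem => [[]] h; [move: vt | move: ut]; rewrite h.
  have : v \in proj tau.
    by move/subsetP: hD => /(_ v uD); rewrite in_setU (negbTE vr).
  by case/proj_mem => [[]] h; [move: ut | move: vt]; rewrite h.
have XN : #|X| = #|N|.
  suff -> : N = fst @: X by rewrite card_in_imset.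
  apply/setP => v; rewrite inE; apply/andP/imsetP; last first.
    by case=> x; rewrite XE => /and4P [h1 h2 _ _] ->.
  case=> vr vM.
  case hvf: ((v, false) \in tau).
    exists (v, true) => //; rewrite XE /= vr vM /=.
    have vt : v \in proj tau by apply: (imset_f fst hvf).
    apply/andP; split.
      apply: (subsetP (star vM ptauM _)); last by rewrite inE setU11 vt.
      by apply: (subset_trans hD); rewrite -setUA; apply: subsetUr.
    by apply/negP => h; move: (tau_inj h hvf (erefl v)).
  by exists (v, false); rewrite // XE /= vr vM hvf.
have NS : #|N| = #|[set s in M | proj rho \subset s]|.
  have injN : {in N &, injective (fun v => v |: proj rho)}.
    move=> v u; rewrite !inE => /andP [vr _] /andP [ur _] E.
    have : v \in u |: proj rho by rewrite -E setU11.
    by rewrite in_setU1 (negbTE vr) orbF => /eqP.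
  suff -> : [set s in M | proj rho \subset s] = (fun v => v |: proj rho) @: N by rewrite card_in_imset.
  apply/setP => s; rewrite inE; apply/andP/imsetP; last first.
    by case=> v; rewrite inE => /andP [_ vM] ->; split => //; apply: subsetUr.
  case=> sM rs.
  have : ~~ (s \subset proj rho).
    apply/negP => /subset_leq_card; rewrite (Msize sM) hrinj hrk.
    by rewrite ltnn.
  case/subsetPn => v vs vr.
  have E : v |: proj rho == s.
    rewrite eqEcard (Msize sM) cardsU1 vr hrinj hrk leqnn andbT.
    by apply/subsetP => y; rewrite in_setU1 => /predU1P [-> //| /(subsetP rs)].
  exists v; last by rewrite (eqP E).
  by rewrite inE vr (eqP E) sM.
rewrite XN NS; apply: Mcyc; last by rewrite hrinj.
by rewrite imset_eq0.
Qed.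

End Rho.

Lemma OmegaP c : reflect (exists s t, c = [set s; t] /\ good s t) (c \in Omega M Delta k).
Proof.
rewrite inE; apply: (iffP existsP) => [[s /existsP [t /andP [/eqP -> g]]] | [s [t [-> g]]]].
  by exists s, t.
by exists s; apply/existsP; exists t; rewrite eqxx.
Qed.

Lemma good_of c s t s1 t1 : c = [set s1; t1] -> good s1 t1 -> s \in c -> t \in c ->
  s != t -> good s t /\ c = [set s; t].
Proof.
move=> -> g; rewrite !in_set2 => /orP [] /eqP -> /orP [] /eqP -> //; rewrite ?eqxx //.
by move=> _; rewrite good_sym setUC; split.
Qed.

Lemma main_cycle : is_cycle2 (Omega M Delta k).
Proof.
move=> c'; set F := [set c in Omega M Delta k | is_bface c' c].
case: (set_0Vmem F) => [-> | [c0]]; first by rewrite cards0.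
rewrite inE => /andP [/OmegaP [s1 [t1 [ec0 g1]]]].
case/existsP => s /andP [sc /existsP [t /andP [tc /existsP [x /andP [xs /and3P [st ne /eqP ec']]]]]].
have [g _] := good_of ec0 g1 sc tc st.
set rho := s :\ x.
have es : s = x |: rho by rewrite /rho setD1K.
have xr : x \notin rho by rewrite /rho setD11.
case/and5P: (g) => hs ht /eqP hsk /eqP htk /andP [hdisj hD].
have hrk : #|rho| = k by move: hsk; rewrite (cardsD1 x s) xs add1n => [[]].
case/and4P: (hs) => _ /imset_injP hsinj _ hssgn.
have hrinj : #|proj rho| = #|rho|.
  apply/eqP/imset_injP => y z yr zr; apply: hsinj; rewrite es setU1r //.
have hrsgn : [forall y in rho, if y.2 then y.1 \in Delta else y.1 \in vertM M].
  apply/forall_inP => y yr; move/forall_inP: hssgn; apply; rewrite es setU1r //.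
have hdr : [disjoint rho & t].
  by apply: (disjointWl _ hdisj); rewrite /rho subsetDl.
have hrne : rho != set0 by [].
have ecr : c' = [set rho; t] by [].
clear ne ec'.
clearbody rho.
have := count_X hrne hrk hrinj hrsgn ht htk hdr.
have injf : {in X rho t &, injective (fun y => [set y |: rho; t])}.
  move=> y z; rewrite !inE => /andP [yr gy] /andP [zr gz] E.
  have yt : y \notin t by move: gy; rewrite goodX // => /and5P [].
  have : y |: rho \in [set z |: rho; t] by rewrite -E set21.
  rewrite in_set2 => /orP [/eqP E2 | /eqP E2]; last by move: yt; rewrite -E2 setU11.
  have : y \in z |: rho by rewrite -E2 setU11.
  by rewrite in_setU1 (negbTE yr) orbF => /eqP.
suff -> : F = (fun y => [set y |: rho; t]) @: X rho t by rewrite card_in_imset.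
apply/setP => c; rewrite inE; apply/andP/imsetP.
  case=> /OmegaP [s2 [t2 [ec g2]]].
  case/existsP => s' /andP [sc' /existsP [t' /andP [tc' /existsP [y /andP [ys /and3P [st' ne' /eqP ec2]]]]]].
  have [g' ec3] := good_of ec g2 sc' tc' st'.
  case/and5P: (g') => _ _ /eqP hs'k /eqP ht'k _.
  have hs'r : #|s' :\ y| = k by move: hs'k; rewrite (cardsD1 y s') ys add1n => [[]].
  have E1 : s' :\ y = rho.
    have : s' :\ y \in [set rho; t] by rewrite -ecr ec2 set21.
    rewrite in_set2 => /orP [/eqP // | /eqP E].
    by move: hs'r; rewrite E htk => /eqP; rewrite gtn_eqF.
  have E2 : t' = t.
    have : t' \in [set rho; t] by rewrite -ecr ec2 set22.
    rewrite in_set2 => /orP [/eqP E | /eqP //].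
    by move: ht'k; rewrite E hrk => /eqP; rewrite ltn_eqF.
  have es' : s' = y |: rho by rewrite -E1 setD1K.
  exists y; last by rewrite ec3 es' E2.
  by rewrite inE -es' -E2 g' andbT -E1 setD11.
case=> y yX ->.
have yX' := yX; rewrite inE in yX'; case/andP: yX' => yr gy.
split; first by apply/OmegaP; exists (y |: rho), t.
have yt : y \notin t by move: gy; rewrite goodX // => /and5P [].
apply/existsP; exists (y |: rho); rewrite set21 /=.
apply/existsP; exists t; rewrite set22 /=.
have ne2 : y |: rho != t by apply/eqP => E; move: yt; rewrite -E setU11.
apply/existsP; exists y; rewrite setU11 /= setU1K // hrne ecr eqxx ne2.
by [].
Qed.

End Proof.

Theorem lemma4p3 (V : finType) (L : {set {set V}}) (k : nat)
  (M : {set {set V}}) (Delta : {set V}) :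
  is_simplicial_complex L ->
  is_kcycle L k M ->
  Delta \in M ->
  star_condition M Delta ->
  is_cycle2 (Omega M Delta k).
Proof.
move=> _ [_ [hsz hcyc]] hD hst.
exact: main_cycle.
Qed.
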